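(* (i) For real $p\neq 0$, the inequality $\frac{1}{3}\left( \frac{\sin x}{x}\right) ^{4p}+\frac{2}{3}\left( \frac{\tan x}{x}\right) ^{p}>1$ holds for all $x\in(0,\pi/2)$ if and only if $p>0$ or $p\leq -\frac{\ln 3}{4(\ln \pi -\ln 2)}$. (ii) The reverse inequality $\frac{1}{3}\left( \frac{\sin x}{x}\right) ^{4p}+\frac{2}{3}\left( \frac{\tan x}{x}\right) ^{p}<1$ holds for all $x\in(0,\pi/2)$ if and only if $-2/5\leq p<0$. *)

(* Defs.v *)
From Stdlib Require Import Reals.
Open Scope R_scope.

Definition lhs (p x : R) : R :=
  1/3 * Rpower (sin x / x) (4 * p) + 2/3 * Rpower (tan x / x) p.

(* Main.v *)
Require Import Defs.
From Stdlib Require Import Reals Lra Lia Psatz Factorial.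
From Coquelicot Require Coquelicot.
Open Scope R_scope.

Module ExpBounds.
Import Coquelicot.Coquelicot.
Lemma mono_le (f df : R -> R) (a b : R) : a <= b ->
  (forall x, is_derive f x (df x)) -> (forall x, a <= x <= b -> 0 <= df x) -> f a <= f b.
Proof.
  intros Hab Hd Hp. destruct (Req_dec a b) as [->|Hne]; [lra|].
  destruct (MVT_gen f a b df) as [c [Hc E]].
  - intros x _. apply Hd.
  - intros x _. apply continuity_pt_filterlim. apply (@ex_derive_continuous R_AbsRing R_NormedModule f x). eexists; apply Hd.
  - rewrite Rmin_left in Hc by lra. rewrite Rmax_right in Hc by lra.
    assert (0 <= df c * (b - a)) by (apply Rmult_le_pos; [apply Hp; lra| lra]). lra.
Qed.
Lemma exp_lb2 u : 0 <= u -> 1 + u + u^2/2 <= exp u.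
Proof.
  intros Hu.
  assert (H := mono_le (fun v => exp v - (1 + v + v^2/2)) (fun v => exp v - (1 + v)) 0 u Hu).
  cbv beta in H. rewrite exp_0 in H.
  assert (H' : 1 - (1 + 0 + 0^2/2) <= exp u - (1 + u + u^2/2)); [|simpl in H'; lra].
  apply H.
  - intros x. auto_derive; [easy|]. simpl. lra.
  - intros x _. pose proof (exp_ineq1_le x). lra.
Qed.
Lemma exp_ub2n v : 0 <= v -> exp (-v) <= 1 - v + v^2/2.
Proof.
  intros Hv.
  assert (H := mono_le (fun s => 1 - s + s^2/2 - exp (-s)) (fun s => -1 + s + exp (-s)) 0 v Hv).
  cbv beta in H. rewrite Ropp_0, exp_0 in H.
  assert (H' : 1 - 0 + 0^2/2 - 1 <= 1 - v + v^2/2 - exp (-v)); [|simpl in H'; lra].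
  apply H.
  - intros x. auto_derive; [easy|]. simpl. lra.
  - intros x _. pose proof (exp_ineq1_le (-x)). lra.
Qed.
Lemma exp_lb3n w : 0 <= w -> 1 - w + w^2/2 - w^3/6 <= exp (-w).
Proof.
  intros Hw.
  assert (H := mono_le (fun s => exp (-s) - (1 - s + s^2/2 - s^3/6)) (fun s => -exp (-s) - (-1 + s - s^2/2)) 0 w Hw).
  cbv beta in H. rewrite Ropp_0, exp_0 in H.
  assert (H' : 1 - (1 - 0 + 0^2/2 - 0^3/6) <= exp (-w) - (1 - w + w^2/2 - w^3/6)); [|simpl in H'; lra].
  apply H.
  - intros x. auto_derive; [easy|]. simpl. lra.
  - intros x Hx. pose proof (exp_ub2n x ltac:(lra)). lra.
Qed.
End ExpBounds.
Definition rlb (y:R) := 1 * 1 + (-1/6) * y + (1/120) * y^2 + (-1/5040) * y^3 + (1/362880) * y^4 + (-1/39916800) * y^5.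
Definition rub (y:R) := 1 * 1 + (-1/6) * y + (1/120) * y^2 + (-1/5040) * y^3 + (1/362880) * y^4.
Definition clb (y:R) := 1 * 1 + (-1/2) * y + (1/24) * y^2 + (-1/720) * y^3 + (1/40320) * y^4 + (-1/3628800) * y^5.
Definition cub (y:R) := 1 * 1 + (-1/2) * y + (1/24) * y^2 + (-1/720) * y^3 + (1/40320) * y^4.
Definition PP (y:R) := 1 * 1 + (-1/15) * y + (-1/23625) * y^3 + (-1/285000) * y^4.
Definition QQ (y:R) := 1 * 1 + (-1/5) * y + (-1/75) * y^2 + (-4/1125) * y^3.
Definition SS (y:R) := 1 * 1 + (-1/12) * y + (1/1440) * y^2 + (-1/24192) * y^3.
Definition KK (y:R) := 1 * 1 + (-1/4) * y + (-1/96) * y^2 + (-19/5760) * y^3 + (-559/645120) * y^4 + (-1/1400) * y^5.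
Lemma polyBa : forall y, 0 < y -> y <= (247/100) -> 0 < rlb y ^2 - PP y ^5.
Proof.
  intros y H0 H1.
  replace (rlb y ^2 - PP y ^5) with (y^4 * ((3700000000000000000000000000000/2067701829434200413705978646755559044381333) * (y^0 * ((247/100) - y)^16) + ((1778565920000000000000000000000000/68234160371328613652297295342933448464583989) * (y^1 * ((247/100) - y)^15) + ((84629864157568750000000000000000000/477639122599300295566081067400534139252087923) * (y^2 * ((247/100) - y)^14) + ((3205246338642779075000000000000000000/4298752103393702660094729606604807253268791307) * (y^3 * ((247/100) - y)^13) + ((2155153719702948137588281250000000000/992019716167777536944937601524186289215874917) * (y^4 * ((247/100) - y)^12) + ((96721487759344048855505623437500000000/20832414039523328275843689632007912073533373257) * (y^5 * ((247/100) - y)^11) + ((5169295408709838451746477602216406250000/687469663304269833102841757856261098426601317481) * (y^6 * ((247/100) - y)^10) + ((19385210509972379398408887299789487500000/2062408989912809499308525273568783295279803952443) * (y^7 * ((247/100) - y)^9) + ((396113133453157366551763923306557396350000/43310588788168999485479030744944449200875883001303) * (y^8 * ((247/100) - y)^8) + ((128642755774854883819831099437661999609600/18561680909215285493776727462119049657518235571987) * (y^9 * ((247/100) - y)^7) + ((376779335721778452618562692820997659219472/92808404546076427468883637310595248287591177859935) * (y^10 * ((247/100) - y)^6) + ((46243779258374388881241778797941629453544541976/25580316503012315321111052533732815309267318397644584375) * (y^11 * ((247/100) - y)^5) + ((6077451678732380631136389735281093272642581328229/10232126601204926128444421013493126123706927359057833750000) * (y^12 * ((247/100) - y)^4) + ((1819146116793094288354506948431514557707224014150647/13301764581566403966977747317541063960819005566775183875000000)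 * (y^13 * ((247/100) - y)^3) + ((166882445679293559686766063856561838364580530496053817/8313602863479002479361092073463164975511878479234489921875000000) * (y^14 * ((247/100) - y)^2) + ((25370917786716500015735596626441330521937468219911993437/16627205726958004958722184146926329951023756958468979843750000000000) * (y^15 * ((247/100) - y)^1) + ((9412843103322267568441205093708875113331267697890905622903/332544114539160099174443682938526599020475139169379596875000000000000000) * (y^16 * ((247/100) - y)^0))))))))))))))))))).
  2:{ unfold rlb, PP; field. }
  apply Rmult_lt_0_compat; [apply pow_lt; lra|].
  apply Rplus_le_lt_0_compat; [apply Rmult_le_pos; [lra| apply Rmult_le_pos; apply pow_le; lra]|].
  apply Rplus_le_lt_0_compat; [apply Rmult_le_pos; [lra| apply Rmult_le_pos; apply pow_le; lra]|].
  apply Rplus_le_lt_0_compat; [apply Rmult_le_pos; [lra| apply Rmult_le_pos; apply pow_le; lra]|].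
  apply Rplus_le_lt_0_compat; [apply Rmult_le_pos; [lra| apply Rmult_le_pos; apply pow_le; lra]|].
  apply Rplus_le_lt_0_compat; [apply Rmult_le_pos; [lra| apply Rmult_le_pos; apply pow_le; lra]|].
  apply Rplus_le_lt_0_compat; [apply Rmult_le_pos; [lra| apply Rmult_le_pos; apply pow_le; lra]|].
  apply Rplus_le_lt_0_compat; [apply Rmult_le_pos; [lra| apply Rmult_le_pos; apply pow_le; lra]|].
  apply Rplus_le_lt_0_compat; [apply Rmult_le_pos; [lra| apply Rmult_le_pos; apply pow_le; lra]|].
  apply Rplus_le_lt_0_compat; [apply Rmult_le_pos; [lra| apply Rmult_le_pos; apply pow_le; lra]|].
  apply Rplus_le_lt_0_compat; [apply Rmult_le_pos; [lra| apply Rmult_le_pos; apply pow_le; lra]|].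
  apply Rplus_le_lt_0_compat; [apply Rmult_le_pos; [lra| apply Rmult_le_pos; apply pow_le; lra]|].
  apply Rplus_le_lt_0_compat; [apply Rmult_le_pos; [lra| apply Rmult_le_pos; apply pow_le; lra]|].
  apply Rplus_le_lt_0_compat; [apply Rmult_le_pos; [lra| apply Rmult_le_pos; apply pow_le; lra]|].
  apply Rplus_le_lt_0_compat; [apply Rmult_le_pos; [lra| apply Rmult_le_pos; apply pow_le; lra]|].
  apply Rplus_le_lt_0_compat; [apply Rmult_le_pos; [lra| apply Rmult_le_pos; apply pow_le; lra]|].
  apply Rplus_le_lt_0_compat; [apply Rmult_le_pos; [lra| apply Rmult_le_pos; apply pow_le; lra]|].
  apply Rmult_lt_0_compat; [lra| rewrite Rmult_1_r; apply pow_lt; lra].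
Qed.

Lemma polyBb : forall y, 0 < y -> y <= (247/100) -> 0 < QQ y ^5 - cub y ^2.
Proof.
  intros y H0 H1.
  replace (QQ y ^5 - cub y ^2) with (y^4 * ((160000000000000000000/692234809588198496663356131) * (y^0 * ((247/100) - y)^11) + ((222982250000000000000/98890687084028356666193733) * (y^1 * ((247/100) - y)^10) + ((6850305833125000000000/692234809588198496663356131) * (y^2 * ((247/100) - y)^9) + ((160256446589573125000000/6230113286293786469970205179) * (y^3 * ((247/100) - y)^8) + ((1912412925319722740703125/43610793004056505289791436253) * (y^4 * ((247/100) - y)^7) + ((2873581427688105020408125/56071019576644078229731846611) * (y^5 * ((247/100) - y)^6) + ((2334449736316944905658551/56071019576644078229731846611) * (y^6 * ((247/100) - y)^5) + ((97953164310895693213007323/4205326468248305867229888495825) * (y^7 * ((247/100) - y)^4) + ((13662892554907509720680855629/1576997425593114700211208185934375) * (y^8 * ((247/100) - y)^3) + ((43484355185919570246177337559/21902742022126593058489002582421875) * (y^9 * ((247/100) - y)^2) + ((17530660118148874378145301550547/73921754324677251572400383715673828125) * (y^10 * ((247/100) - y)^1) + ((8783897295006347306161161129641513/970223025511388926887755036268218994140625) * (y^11 * ((247/100) - y)^0)))))))))))))).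
  2:{ unfold QQ, cub; field. }
  apply Rmult_lt_0_compat; [apply pow_lt; lra|].
  apply Rplus_le_lt_0_compat; [apply Rmult_le_pos; [lra| apply Rmult_le_pos; apply pow_le; lra]|].
  apply Rplus_le_lt_0_compat; [apply Rmult_le_pos; [lra| apply Rmult_le_pos; apply pow_le; lra]|].
  apply Rplus_le_lt_0_compat; [apply Rmult_le_pos; [lra| apply Rmult_le_pos; apply pow_le; lra]|].
  apply Rplus_le_lt_0_compat; [apply Rmult_le_pos; [lra| apply Rmult_le_pos; apply pow_le; lra]|].
  apply Rplus_le_lt_0_compat; [apply Rmult_le_pos; [lra| apply Rmult_le_pos; apply pow_le; lra]|].
  apply Rplus_le_lt_0_compat; [apply Rmult_le_pos; [lra| apply Rmult_le_pos; apply pow_le; lra]|].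
  apply Rplus_le_lt_0_compat; [apply Rmult_le_pos; [lra| apply Rmult_le_pos; apply pow_le; lra]|].
  apply Rplus_le_lt_0_compat; [apply Rmult_le_pos; [lra| apply Rmult_le_pos; apply pow_le; lra]|].
  apply Rplus_le_lt_0_compat; [apply Rmult_le_pos; [lra| apply Rmult_le_pos; apply pow_le; lra]|].
  apply Rplus_le_lt_0_compat; [apply Rmult_le_pos; [lra| apply Rmult_le_pos; apply pow_le; lra]|].
  apply Rplus_le_lt_0_compat; [apply Rmult_le_pos; [lra| apply Rmult_le_pos; apply pow_le; lra]|].
  apply Rmult_lt_0_compat; [lra| rewrite Rmult_1_r; apply pow_lt; lra].
Qed.

Lemma polyBc : forall y, 0 < y -> y <= (247/100) -> 0 < 3*PP y^4 - 2*PP y^3*QQ y - 1.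
Proof.
  intros y H0 H1.
  replace (3*PP y^4 - 2*PP y^3*QQ y - 1) with (y^3 * ((73600000000000000000000000/2407255549395484918727277569182203) * (y^0 * ((247/100) - y)^13) + ((69542000000000000000000000/185173503799652686055944428398631) * (y^1 * ((247/100) - y)^12) + ((393667328800000000000000000/185173503799652686055944428398631) * (y^2 * ((247/100) - y)^11) + ((352516704054400000000000000/48007945429539585273763370325571) * (y^3 * ((247/100) - y)^10) + ((604159902358762576000000000000/34997792218134357664573496967341259) * (y^4 * ((247/100) - y)^9) + ((37806377923277862910400000000/1296214526597568802391610998790417) * (y^5 * ((247/100) - y)^8) + ((240971446381680896412653872000000/6614582729227393598604390926827497951) * (y^6 * ((247/100) - y)^7) + ((75081897675675737767454307548800/2204860909742464532868130308942499317) * (y^7 * ((247/100) - y)^6) + ((2363016836402004488484082886218816/99218740938410903979065863902412469265) * (y^8 * ((247/100) - y)^5) + ((641028971855876373440286650466019807/52089838992665724589009578548766546364125) * (y^9 * ((247/100) - y)^4) + ((45730768584508717802179730347437381907/10017276729358793190194149720916643531562500) * (y^10 * ((247/100) - y)^3) + ((1665433699377803753569742883372796486637/1446939972018492349694710515243515176781250000) * (y^11 * ((247/100) - y)^2) + ((2876571821071285625958448408620714524481647/16278074685208038934065493296489545738789062500000) * (y^12 * ((247/100) - y)^1) + ((42229118815629121811907333421016086969369549607/3385839534523272098285622605669825513668125000000000000) * (y^13 * ((247/100) - y)^0)))))))))))))))).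
  2:{ unfold PP, QQ; field. }
  apply Rmult_lt_0_compat; [apply pow_lt; lra|].
  apply Rplus_le_lt_0_compat; [apply Rmult_le_pos; [lra| apply Rmult_le_pos; apply pow_le; lra]|].
  apply Rplus_le_lt_0_compat; [apply Rmult_le_pos; [lra| apply Rmult_le_pos; apply pow_le; lra]|].
  apply Rplus_le_lt_0_compat; [apply Rmult_le_pos; [lra| apply Rmult_le_pos; apply pow_le; lra]|].
  apply Rplus_le_lt_0_compat; [apply Rmult_le_pos; [lra| apply Rmult_le_pos; apply pow_le; lra]|].
  apply Rplus_le_lt_0_compat; [apply Rmult_le_pos; [lra| apply Rmult_le_pos; apply pow_le; lra]|].
  apply Rplus_le_lt_0_compat; [apply Rmult_le_pos; [lra| apply Rmult_le_pos; apply pow_le; lra]|].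
  apply Rplus_le_lt_0_compat; [apply Rmult_le_pos; [lra| apply Rmult_le_pos; apply pow_le; lra]|].
  apply Rplus_le_lt_0_compat; [apply Rmult_le_pos; [lra| apply Rmult_le_pos; apply pow_le; lra]|].
  apply Rplus_le_lt_0_compat; [apply Rmult_le_pos; [lra| apply Rmult_le_pos; apply pow_le; lra]|].
  apply Rplus_le_lt_0_compat; [apply Rmult_le_pos; [lra| apply Rmult_le_pos; apply pow_le; lra]|].
  apply Rplus_le_lt_0_compat; [apply Rmult_le_pos; [lra| apply Rmult_le_pos; apply pow_le; lra]|].
  apply Rplus_le_lt_0_compat; [apply Rmult_le_pos; [lra| apply Rmult_le_pos; apply pow_le; lra]|].
  apply Rplus_le_lt_0_compat; [apply Rmult_le_pos; [lra| apply Rmult_le_pos; apply pow_le; lra]|].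
  apply Rmult_lt_0_compat; [lra| rewrite Rmult_1_r; apply pow_lt; lra].
Qed.

Lemma polyBd : forall y, 0 < y -> y <= (247/100) -> 0 < rlb y.
Proof.
  intros y H0 H1.
  replace (rlb y) with (y^0 * ((10000000000/919358226007) * (y^0 * ((247/100) - y)^5) + ((137650000000/2758074678021) * (y^1 * ((247/100) - y)^4) + ((252125225000/2758074678021) * (y^2 * ((247/100) - y)^3) + ((4838105522125/57919568238441) * (y^3 * ((247/100) - y)^2) + ((635036108834405/16680835652671008) * (y^4 * ((247/100) - y)^1) + ((253984415019064993/36697838435876217600) * (y^5 * ((247/100) - y)^0)))))))).
  2:{ unfold rlb; field. }
  apply Rmult_lt_0_compat; [apply pow_lt; lra|].
  apply Rplus_le_lt_0_compat; [apply Rmult_le_pos; [lra| apply Rmult_le_pos; apply pow_le; lra]|].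
  apply Rplus_le_lt_0_compat; [apply Rmult_le_pos; [lra| apply Rmult_le_pos; apply pow_le; lra]|].
  apply Rplus_le_lt_0_compat; [apply Rmult_le_pos; [lra| apply Rmult_le_pos; apply pow_le; lra]|].
  apply Rplus_le_lt_0_compat; [apply Rmult_le_pos; [lra| apply Rmult_le_pos; apply pow_le; lra]|].
  apply Rplus_le_lt_0_compat; [apply Rmult_le_pos; [lra| apply Rmult_le_pos; apply pow_le; lra]|].
  apply Rmult_lt_0_compat; [lra| rewrite Rmult_1_r; apply pow_lt; lra].
Qed.

Lemma polyBe : forall y, 0 < y -> y <= (247/100) -> 0 < PP y - 2/3.
Proof.
  intros y H0 H1.
  replace (PP y - 2/3) with (y^0 * ((100000000/11166294243) * (y^0 * ((247/100) - y)^4) + ((350600000/11166294243) * (y^1 * ((247/100) - y)^3) + ((150600000/3722098081) * (y^2 * ((247/100) - y)^2) + ((79256723108/3517382686545) * (y^3 * ((247/100) - y)^1) + ((15866381414363/3517382686545000) * (y^4 * ((247/100) - y)^0))))))).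
  2:{ unfold PP; field. }
  apply Rmult_lt_0_compat; [apply pow_lt; lra|].
  apply Rplus_le_lt_0_compat; [apply Rmult_le_pos; [lra| apply Rmult_le_pos; apply pow_le; lra]|].
  apply Rplus_le_lt_0_compat; [apply Rmult_le_pos; [lra| apply Rmult_le_pos; apply pow_le; lra]|].
  apply Rplus_le_lt_0_compat; [apply Rmult_le_pos; [lra| apply Rmult_le_pos; apply pow_le; lra]|].
  apply Rplus_le_lt_0_compat; [apply Rmult_le_pos; [lra| apply Rmult_le_pos; apply pow_le; lra]|].
  apply Rmult_lt_0_compat; [lra| rewrite Rmult_1_r; apply pow_lt; lra].
Qed.

Lemma polyBf : forall y, 0 < y -> y <= (247/100) -> 0 < QQ y.
Proof.
  intros y H0 H1.
  replace (QQ y) with (y^0 * ((1000000/15069223) * (y^0 * ((247/100) - y)^3) + ((2506000/15069223) * (y^1 * ((247/100) - y)^2) + ((5791964/45207669) * (y^2 * ((247/100) - y)^1) + ((417459608/16952875875) * (y^3 * ((247/100) - y)^0)))))).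
  2:{ unfold QQ; field. }
  apply Rmult_lt_0_compat; [apply pow_lt; lra|].
  apply Rplus_le_lt_0_compat; [apply Rmult_le_pos; [lra| apply Rmult_le_pos; apply pow_le; lra]|].
  apply Rplus_le_lt_0_compat; [apply Rmult_le_pos; [lra| apply Rmult_le_pos; apply pow_le; lra]|].
  apply Rplus_le_lt_0_compat; [apply Rmult_le_pos; [lra| apply Rmult_le_pos; apply pow_le; lra]|].
  apply Rmult_lt_0_compat; [lra| rewrite Rmult_1_r; apply pow_lt; lra].
Qed.

Lemma polyAa : forall y, 0 < y -> y <= (1907/1000) -> 0 < SS y ^2 - rub y.
Proof.
  intros y H0 H1.
  replace (SS y ^2 - rub y) with (y^4 * ((41875/32991679728) * (y^0 * ((1907/1000) - y)^2) + ((567475/226228660992) * (y^1 * ((1907/1000) - y)^1) + ((2641001449/2128359242612736) * (y^2 * ((1907/1000) - y)^0))))).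
  2:{ unfold SS, rub; field. }
  apply Rmult_lt_0_compat; [apply pow_lt; lra|].
  apply Rplus_le_lt_0_compat; [apply Rmult_le_pos; [lra| apply Rmult_le_pos; apply pow_le; lra]|].
  apply Rplus_le_lt_0_compat; [apply Rmult_le_pos; [lra| apply Rmult_le_pos; apply pow_le; lra]|].
  apply Rmult_lt_0_compat; [lra| rewrite Rmult_1_r; apply pow_lt; lra].
Qed.

Lemma polyAb : forall y, 0 < y -> y <= (1907/1000) -> 0 < clb y - KK y ^2.
Proof.
  intros y H0 H1.
  replace (clb y - KK y ^2) with (y^5 * ((525224609375000/14300016024176616069) * (y^0 * ((1907/1000) - y)^5) + ((17669369248046875/114400128193412928552) * (y^1 * ((1907/1000) - y)^4) + ((906231535579609375/3660804102189213713664) * (y^2 * ((1907/1000) - y)^3) + ((397376771138778656375/2186720317041023658295296) * (y^3 * ((1907/1000) - y)^2) + ((178145812132252201733/3280080475561535487442944) * (y^4 * ((1907/1000) - y)^1) + ((7810457220873935055317/4100100594451919359303680000) * (y^5 * ((1907/1000) - y)^0)))))))).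
  2:{ unfold clb, KK; field. }
  apply Rmult_lt_0_compat; [apply pow_lt; lra|].
  apply Rplus_le_lt_0_compat; [apply Rmult_le_pos; [lra| apply Rmult_le_pos; apply pow_le; lra]|].
  apply Rplus_le_lt_0_compat; [apply Rmult_le_pos; [lra| apply Rmult_le_pos; apply pow_le; lra]|].
  apply Rplus_le_lt_0_compat; [apply Rmult_le_pos; [lra| apply Rmult_le_pos; apply pow_le; lra]|].
  apply Rplus_le_lt_0_compat; [apply Rmult_le_pos; [lra| apply Rmult_le_pos; apply pow_le; lra]|].
  apply Rplus_le_lt_0_compat; [apply Rmult_le_pos; [lra| apply Rmult_le_pos; apply pow_le; lra]|].
  apply Rmult_lt_0_compat; [lra| rewrite Rmult_1_r; apply pow_lt; lra].
Qed.

Lemma polyAc : forall y, 0 < y -> y <= (1907/1000) -> 0 < 1 + 2*KK y*SS y^3 - 3*SS y^4.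
Proof.
  intros y H0 H1.
  replace (1 + 2*KK y*SS y^3 - 3*SS y^4) with (y^2 * ((50000000000000000000000000000000000/6939522229277657250914696056410233302803) * (y^0 * ((1907/1000) - y)^12) + ((35845325000000000000000000000000000000/437189900444492406807625851553844698076589) * (y^1 * ((1907/1000) - y)^11) + ((186114035627070312500000000000000000000/437189900444492406807625851553844698076589) * (y^2 * ((1907/1000) - y)^10) + ((581169508016023544921875000000000000000/437189900444492406807625851553844698076589) * (y^3 * ((1907/1000) - y)^9) + ((228960570586652928482659912109375000000000/82628891184009064886641285943676647936475321) * (y^4 * ((1907/1000) - y)^8) + ((334289791835009123569174964660644531250000/82628891184009064886641285943676647936475321) * (y^5 * ((1907/1000) - y)^7) + ((232503180130550997449200923541339111328125/55085927456006043257760857295784431957650214) * (y^6 * ((1907/1000) - y)^6) + ((6291819484268036930069295976373533049169921875/1998958135523547297737625989549425466879210965632) * (y^7 * ((1907/1000) - y)^5) + ((210649344375447295642672860573085171638770703125/127933320673507027055208063331163229880269501800448) * (y^8 * ((1907/1000) - y)^4) + ((7094607336467878637760004933108574654017550583125/12281598784656674597299974079791670068505872172843008) * (y^9 * ((1907/1000) - y)^3) + ((113488657944119521209078447348043366554889499851825/917026042587698369931731397957778031781771788905611264) * (y^10 * ((1907/1000) - y)^2) + ((488379647561344659012361919779740042920020174197083/37729071466465304362905520373120010450450039314973720576) * (y^11 * ((1907/1000) - y)^1) + ((1596430559087315010044292721900580172909227436418613/6602587506631428263508466065296001828828756880120401100800) * (y^12 * ((1907/1000) - y)^0)))))))))))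)))).
  2:{ unfold KK, SS; field. }
  apply Rmult_lt_0_compat; [apply pow_lt; lra|].
  apply Rplus_le_lt_0_compat; [apply Rmult_le_pos; [lra| apply Rmult_le_pos; apply pow_le; lra]|].
  apply Rplus_le_lt_0_compat; [apply Rmult_le_pos; [lra| apply Rmult_le_pos; apply pow_le; lra]|].
  apply Rplus_le_lt_0_compat; [apply Rmult_le_pos; [lra| apply Rmult_le_pos; apply pow_le; lra]|].
  apply Rplus_le_lt_0_compat; [apply Rmult_le_pos; [lra| apply Rmult_le_pos; apply pow_le; lra]|].
  apply Rplus_le_lt_0_compat; [apply Rmult_le_pos; [lra| apply Rmult_le_pos; apply pow_le; lra]|].
  apply Rplus_le_lt_0_compat; [apply Rmult_le_pos; [lra| apply Rmult_le_pos; apply pow_le; lra]|].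
  apply Rplus_le_lt_0_compat; [apply Rmult_le_pos; [lra| apply Rmult_le_pos; apply pow_le; lra]|].
  apply Rplus_le_lt_0_compat; [apply Rmult_le_pos; [lra| apply Rmult_le_pos; apply pow_le; lra]|].
  apply Rplus_le_lt_0_compat; [apply Rmult_le_pos; [lra| apply Rmult_le_pos; apply pow_le; lra]|].
  apply Rplus_le_lt_0_compat; [apply Rmult_le_pos; [lra| apply Rmult_le_pos; apply pow_le; lra]|].
  apply Rplus_le_lt_0_compat; [apply Rmult_le_pos; [lra| apply Rmult_le_pos; apply pow_le; lra]|].
  apply Rplus_le_lt_0_compat; [apply Rmult_le_pos; [lra| apply Rmult_le_pos; apply pow_le; lra]|].
  apply Rmult_lt_0_compat; [lra| rewrite Rmult_1_r; apply pow_lt; lra].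
Qed.

Lemma polyAd : forall y, 0 < y -> y <= (1907/1000) -> 0 < KK y.
Proof.
  intros y H0 H1.
  replace (KK y) with (y^0 * ((1000000000000000/25220486815126307) * (y^0 * ((1907/1000) - y)^5) + ((4523250000000000/25220486815126307) * (y^1 * ((1907/1000) - y)^4) + ((24165354718750000/75661460445378921) * (y^2 * ((1907/1000) - y)^3) + ((126053613989946875/453968762672273526) * (y^3 * ((1907/1000) - y)^2) + ((47128316973094716025/406756011354357079296) * (y^4 * ((1907/1000) - y)^1) + ((58197581649933841403/3389633427952975660800) * (y^5 * ((1907/1000) - y)^0)))))))).
  2:{ unfold KK; field. }
  apply Rmult_lt_0_compat; [apply pow_lt; lra|].
  apply Rplus_le_lt_0_compat; [apply Rmult_le_pos; [lra| apply Rmult_le_pos; apply pow_le; lra]|].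
  apply Rplus_le_lt_0_compat; [apply Rmult_le_pos; [lra| apply Rmult_le_pos; apply pow_le; lra]|].
  apply Rplus_le_lt_0_compat; [apply Rmult_le_pos; [lra| apply Rmult_le_pos; apply pow_le; lra]|].
  apply Rplus_le_lt_0_compat; [apply Rmult_le_pos; [lra| apply Rmult_le_pos; apply pow_le; lra]|].
  apply Rplus_le_lt_0_compat; [apply Rmult_le_pos; [lra| apply Rmult_le_pos; apply pow_le; lra]|].
  apply Rmult_lt_0_compat; [lra| rewrite Rmult_1_r; apply pow_lt; lra].
Qed.

Lemma polyAe : forall y, 0 < y -> y <= (1907/1000) -> 0 < SS y - 2/3.
Proof.
  intros y H0 H1.
  replace (SS y - 2/3) with (y^0 * ((1000000000/20805268929) * (y^0 * ((1907/1000) - y)^3) + ((2523250000/20805268929) * (y^1 * ((1907/1000) - y)^2) + ((24648916225/249663227148) * (y^2 * ((1907/1000) - y)^1) + ((4273648613557/167773688643456) * (y^3 * ((1907/1000) - y)^0)))))).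
  2:{ unfold SS; field. }
  apply Rmult_lt_0_compat; [apply pow_lt; lra|].
  apply Rplus_le_lt_0_compat; [apply Rmult_le_pos; [lra| apply Rmult_le_pos; apply pow_le; lra]|].
  apply Rplus_le_lt_0_compat; [apply Rmult_le_pos; [lra| apply Rmult_le_pos; apply pow_le; lra]|].
  apply Rplus_le_lt_0_compat; [apply Rmult_le_pos; [lra| apply Rmult_le_pos; apply pow_le; lra]|].
  apply Rmult_lt_0_compat; [lra| rewrite Rmult_1_r; apply pow_lt; lra].
Qed.

Lemma polyAr : forall u, 0 < u -> u <= (19/100) -> 0 < (2/3)^8*(157/100-u)^13*(1-u^2/6)^5 - (61/50)^8*u^3*(2 - 157*u/100 + 157*u^3/1200)^8.
Proof.
  intros u H0 H1.
  replace ((2/3)^8*(157/100-u)^13*(1-u^2/6)^5 - (61/50)^8*u^3*(2 - 157*u/100 + 157*u^3/1200)^8) with (u^0 * ((90143713837089464819901484433920000000000000000000000000000/220453634644044001445340130751177771979) * (u^0 * ((19/100) - u)^27) + ((2292061819348160150070361311211520000000000000000000000000000/220453634644044001445340130751177771979) * (u^1 * ((19/100) - u)^26) + ((84160285140212923256014131584180558720000000000000000000000000/661360903932132004336020392253533315937) * (u^2 * ((19/100) - u)^25) + ((219988013949563328088122878731934600960000000000000000000000000/220453634644044001445340130751177771979) * (u^3 * ((19/100) - u)^24) + ((11169905357526684888717115972772576716902208000000000000000000000/1984082711796396013008061176760599947811) * (u^4 * ((19/100) - u)^23) + ((48262032261155717422636904337469871648655616000000000000000000000/1984082711796396013008061176760599947811)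 * (u^5 * ((19/100) - u)^22) + ((497979182113660891933693156750539569686838782345600000000000000000/5952248135389188039024183530281799843433) * (u^6 * ((19/100) - u)^21) + ((1399025049858758197589356469974735275317639894854400000000000000000/5952248135389188039024183530281799843433) * (u^7 * ((19/100) - u)^20) + ((9806545826166682794014096368603028031255282970038008336000000000000/17856744406167564117072550590845399530299) * (u^8 * ((19/100) - u)^19) + ((338658508226865400614661774495716314856425464875559089766400000000/313276217652062528369693870014831570707) * (u^9 * ((19/100) - u)^18) + ((5101476061028382313039031142724718156210383426259222489447906560000/2819485958868562755327244830133484136363) * (u^10 * ((19/100) - u)^17) + ((7307840513447540805037864052294709576755613244981136791623646627072/2819485958868562755327244830133484136363) * (u^11 * ((19/100) - u)^16) + ((999824250236002201471560051219755296262116196494260487547369790464/313276217652062528369693870014831570707) * (u^12 * ((19/100) - u)^15) + ((5967378683942716555476424973534320769896858232217157545667053350677792/1762178724292851722079528018833427585226875) * (u^13 * ((19/100) - u)^14) + ((5460465230341088485882057764251081840337482684137843481603222803423312/1762178724292851722079528018833427585226875) * (u^14 * ((19/100) - u)^13) + ((3587974725109410054199553889616468801036909197550652346034273622568246457/1468482270244043101732940015694522987689062500) * (u^15 * ((19/100) - u)^12) + ((10007420523156782752180182069755121973872256507606925430044839750597343/6043136914584539513304279899977460854687500) * (u^16 * ((19/100) - u)^11) + ((3134739724288865984777924301103562244880048726224199640053626432311365770149/3263293933875651337184311145987828861531250000000) * (u^17 * ((19/100) - u)^10) + ((206172857802863992011750493110149341906984802879339469244275869270507848919/435105857850086844957908152798377181537500000000)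 * (u^18 * ((19/100) - u)^9) + ((4824522655529563563435889188665037830665626910259446369018600981310074467877963/24494848293782666827260014527908641331000000000000000) * (u^19 * ((19/100) - u)^8) + ((4171759765728189008157752111313014892515102075540632435048061692495318006005281/61237120734456667068150036319771603327500000000000000) * (u^20 * ((19/100) - u)^7) + ((23597787173582971787076407270609136517579709124760473841465214425935615493237928119/1224742414689133341363000726395432066550000000000000000000) * (u^21 * ((19/100) - u)^6) + ((10648411658500740810878433192986033322669010840352376697079786271201683027270895919/2449484829378266682726001452790864133100000000000000000000) * (u^22 * ((19/100) - u)^5) + ((73922370341577496994779348738300467974810409228255605395834734802998762570140048501347/97979393175130667309040058111634565324000000000000000000000000) * (u^23 * ((19/100) - u)^4) + ((27956239605157586365213866728348258173718284772401748086417566211680771693336579208271/293938179525392001927120174334903695972000000000000000000000000) * (u^24 * ((19/100) - u)^3) + ((46282988408121154673952050685540670533183575542256003420729280295872473595649111824484819/5878763590507840038542403486698073919440000000000000000000000000000) * (u^25 * ((19/100) - u)^2) + ((1010593416656865567028286698868925218593576898810872934460329523116278483210955337994819/2939381795253920019271201743349036959720000000000000000000000000000) * (u^26 * ((19/100) - u)^1) + ((19353978633545206146272005382625960929504380200760475467321503246682343667037984876080960341/5643613046887526437000707347230150962662400000000000000000000000000000000) * (u^27 * ((19/100) - u)^0)))))))))))))))))))))))))))))).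
  2:{ field. }
  apply Rmult_lt_0_compat; [apply pow_lt; lra|].
  apply Rplus_le_lt_0_compat; [apply Rmult_le_pos; [lra| apply Rmult_le_pos; apply pow_le; lra]|].
  apply Rplus_le_lt_0_compat; [apply Rmult_le_pos; [lra| apply Rmult_le_pos; apply pow_le; lra]|].
  apply Rplus_le_lt_0_compat; [apply Rmult_le_pos; [lra| apply Rmult_le_pos; apply pow_le; lra]|].
  apply Rplus_le_lt_0_compat; [apply Rmult_le_pos; [lra| apply Rmult_le_pos; apply pow_le; lra]|].
  apply Rplus_le_lt_0_compat; [apply Rmult_le_pos; [lra| apply Rmult_le_pos; apply pow_le; lra]|].
  apply Rplus_le_lt_0_compat; [apply Rmult_le_pos; [lra| apply Rmult_le_pos; apply pow_le; lra]|].
  apply Rplus_le_lt_0_compat; [apply Rmult_le_pos; [lra| apply Rmult_le_pos; apply pow_le; lra]|].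
  apply Rplus_le_lt_0_compat; [apply Rmult_le_pos; [lra| apply Rmult_le_pos; apply pow_le; lra]|].
  apply Rplus_le_lt_0_compat; [apply Rmult_le_pos; [lra| apply Rmult_le_pos; apply pow_le; lra]|].
  apply Rplus_le_lt_0_compat; [apply Rmult_le_pos; [lra| apply Rmult_le_pos; apply pow_le; lra]|].
  apply Rplus_le_lt_0_compat; [apply Rmult_le_pos; [lra| apply Rmult_le_pos; apply pow_le; lra]|].
  apply Rplus_le_lt_0_compat; [apply Rmult_le_pos; [lra| apply Rmult_le_pos; apply pow_le; lra]|].
  apply Rplus_le_lt_0_compat; [apply Rmult_le_pos; [lra| apply Rmult_le_pos; apply pow_le; lra]|].
  apply Rplus_le_lt_0_compat; [apply Rmult_le_pos; [lra| apply Rmult_le_pos; apply pow_le; lra]|].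
  apply Rplus_le_lt_0_compat; [apply Rmult_le_pos; [lra| apply Rmult_le_pos; apply pow_le; lra]|].
  apply Rplus_le_lt_0_compat; [apply Rmult_le_pos; [lra| apply Rmult_le_pos; apply pow_le; lra]|].
  apply Rplus_le_lt_0_compat; [apply Rmult_le_pos; [lra| apply Rmult_le_pos; apply pow_le; lra]|].
  apply Rplus_le_lt_0_compat; [apply Rmult_le_pos; [lra| apply Rmult_le_pos; apply pow_le; lra]|].
  apply Rplus_le_lt_0_compat; [apply Rmult_le_pos; [lra| apply Rmult_le_pos; apply pow_le; lra]|].
  apply Rplus_le_lt_0_compat; [apply Rmult_le_pos; [lra| apply Rmult_le_pos; apply pow_le; lra]|].
  apply Rplus_le_lt_0_compat; [apply Rmult_le_pos; [lra| apply Rmult_le_pos; apply pow_le; lra]|].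
  apply Rplus_le_lt_0_compat; [apply Rmult_le_pos; [lra| apply Rmult_le_pos; apply pow_le; lra]|].
  apply Rplus_le_lt_0_compat; [apply Rmult_le_pos; [lra| apply Rmult_le_pos; apply pow_le; lra]|].
  apply Rplus_le_lt_0_compat; [apply Rmult_le_pos; [lra| apply Rmult_le_pos; apply pow_le; lra]|].
  apply Rplus_le_lt_0_compat; [apply Rmult_le_pos; [lra| apply Rmult_le_pos; apply pow_le; lra]|].
  apply Rplus_le_lt_0_compat; [apply Rmult_le_pos; [lra| apply Rmult_le_pos; apply pow_le; lra]|].
  apply Rplus_le_lt_0_compat; [apply Rmult_le_pos; [lra| apply Rmult_le_pos; apply pow_le; lra]|].
  apply Rmult_lt_0_compat; [lra| rewrite Rmult_1_r; apply pow_lt; lra].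
Qed.
Lemma polyD : forall d, 0 < d -> d <= (3/5) -> 0 < -(2/3)*(d+2/5)*((d/100)^2/15 + (d/100)^3/20) + ((d+2/5)^2/3)*(8*((d/100)/6 - (d/100)^2/120)^2 + ((d/100)/3 - (d/100)^2/24)^2) - (d+2/5)^3*(d/100)^3/72.
Proof.
  intros d H0 H1.
  replace (-(2/3)*(d+2/5)*((d/100)^2/15 + (d/100)^3/20) + ((d+2/5)^2/3)*(8*((d/100)/6 - (d/100)^2/120)^2 + ((d/100)/3 - (d/100)^2/24)^2) - (d+2/5)^3*(d/100)^3/72) with (d^3 * ((4981/243000000) * (d^0 * ((3/5) - d)^3) + ((298760011/3240000000000) * (d^1 * ((3/5) - d)^2) + ((79620011/648000000000) * (d^2 * ((3/5) - d)^1) + ((79540033/1555200000000) * (d^3 * ((3/5) - d)^0)))))).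
  2:{ field. }
  apply Rmult_lt_0_compat; [apply pow_lt; lra|].
  apply Rplus_le_lt_0_compat; [apply Rmult_le_pos; [lra| apply Rmult_le_pos; apply pow_le; lra]|].
  apply Rplus_le_lt_0_compat; [apply Rmult_le_pos; [lra| apply Rmult_le_pos; apply pow_le; lra]|].
  apply Rplus_le_lt_0_compat; [apply Rmult_le_pos; [lra| apply Rmult_le_pos; apply pow_le; lra]|].
  apply Rmult_lt_0_compat; [lra| rewrite Rmult_1_r; apply pow_lt; lra].
Qed.
Lemma polyD2 : forall y, 0 < y -> y <= (1/100) -> 0 < (1 - y/2 + y^2/24 - y^3/720)*(1 + y^2/15 + y^3/20) - (1 - y/6 + y^2/120)^3.
Proof.
  intros y H0 H1.
  replace ((1 - y/2 + y^2/24 - y^3/720)*(1 + y^2/15 + y^3/20) - (1 - y/6 + y^2/120)^3) with (y^3 * ((762500/27) * (y^0 * ((1/100) - y)^3) + ((3041675/36) * (y^1 * ((1/100) - y)^2) + ((72800575/864) * (y^2 * ((1/100) - y)^1) + ((16133583293/576000) * (y^3 * ((1/100) - y)^0)))))).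
  2:{ field. }
  apply Rmult_lt_0_compat; [apply pow_lt; lra|].
  apply Rplus_le_lt_0_compat; [apply Rmult_le_pos; [lra| apply Rmult_le_pos; apply pow_le; lra]|].
  apply Rplus_le_lt_0_compat; [apply Rmult_le_pos; [lra| apply Rmult_le_pos; apply pow_le; lra]|].
  apply Rplus_le_lt_0_compat; [apply Rmult_le_pos; [lra| apply Rmult_le_pos; apply pow_le; lra]|].
  apply Rmult_lt_0_compat; [lra| rewrite Rmult_1_r; apply pow_lt; lra].
Qed.

Lemma fS n : INR (fact (S n)) = INR (S n) * INR (fact n).
Proof. rewrite fact_simpl, mult_INR. reflexivity. Qed.
Lemma f0 : INR (fact 0) = 1. Proof. reflexivity. Qed.
Lemma f1 : INR (fact 1) = 1. Proof. reflexivity. Qed.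
Lemma f2 : INR (fact 2) = 2. Proof. rewrite fS, f1. simpl. lra. Qed.
Lemma f3 : INR (fact 3) = 6. Proof. rewrite fS, f2. simpl. lra. Qed.
Lemma f4 : INR (fact 4) = 24. Proof. rewrite fS, f3. simpl. lra. Qed.
Lemma f5 : INR (fact 5) = 120. Proof. rewrite fS, f4. simpl. lra. Qed.
Lemma f6 : INR (fact 6) = 720. Proof. rewrite fS, f5. simpl. lra. Qed.
Lemma f7 : INR (fact 7) = 5040. Proof. rewrite fS, f6. simpl. lra. Qed.
Lemma f8 : INR (fact 8) = 40320. Proof. rewrite fS, f7. simpl. lra. Qed.
Lemma f9 : INR (fact 9) = 362880. Proof. rewrite fS, f8. simpl. lra. Qed.
Lemma f10 : INR (fact 10) = 3628800. Proof. rewrite fS, f9. simpl. lra. Qed.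
Lemma f11 : INR (fact 11) = 39916800. Proof. rewrite fS, f10. simpl. lra. Qed.
Lemma f12 : INR (fact 12) = 479001600. Proof. rewrite fS, f11. simpl. lra. Qed.
Lemma f13 : INR (fact 13) = 6227020800. Proof. rewrite fS, f12. simpl. lra. Qed.
Lemma f14 : INR (fact 14) = 87178291200. Proof. rewrite fS, f13. simpl. lra. Qed.
Lemma f15 : INR (fact 15) = 1307674368000. Proof. rewrite fS, f14. simpl. lra. Qed.
Lemma f16 : INR (fact 16) = 20922789888000. Proof. rewrite fS, f15. simpl. lra. Qed.
Lemma f17 : INR (fact 17) = 355687428096000. Proof. rewrite fS, f16. simpl. lra. Qed.

Ltac appr := cbn [sum_f_R0 Nat.mul Nat.add];
  rewrite ?f0, ?f1, ?f2, ?f3, ?f4, ?f5, ?f6, ?f7, ?f8, ?f9, ?f10, ?f11, ?f12, ?f13, ?f14, ?f15, ?f16, ?f17.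

Lemma sin5 x : sin_approx x 5 = x * rlb (x^2).
Proof. unfold sin_approx, sin_term, rlb. appr. field. Qed.
Lemma sin4 x : sin_approx x 4 = x * rub (x^2).
Proof. unfold sin_approx, sin_term, rub. appr. field. Qed.
Lemma cos5 x : cos_approx x 5 = clb (x^2).
Proof. unfold cos_approx, cos_term, clb. appr. field. Qed.
Lemma cos4 x : cos_approx x 4 = cub (x^2).
Proof. unfold cos_approx, cos_term, cub. appr. field. Qed.

Lemma trig_bounds x : 0 < x <= 2 ->
  rlb (x^2) <= sin x / x <= rub (x^2) /\ clb (x^2) <= cos x <= cub (x^2).
Proof.
  intros Hx.
  destruct (pre_sin_bound x 2 ltac:(lra) ltac:(lra)) as [s1 _].
  destruct (pre_sin_bound x 1 ltac:(lra) ltac:(lra)) as [_ s2].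
  destruct (pre_cos_bound x 2 ltac:(lra) ltac:(lra)) as [c1 _].
  destruct (pre_cos_bound x 1 ltac:(lra) ltac:(lra)) as [_ c2].
  change (2*2+1)%nat with 5%nat in s1. change (2*(1+1))%nat with 4%nat in s2.
  change (2*2+1)%nat with 5%nat in c1. change (2*(1+1))%nat with 4%nat in c2.
  rewrite sin5 in s1. rewrite sin4 in s2. rewrite cos5 in c1. rewrite cos4 in c2.
  split; [split|split]; try assumption.
  - apply (Rmult_le_reg_l x); [lra|]. field_simplify; [|lra]. lra.
  - apply (Rmult_le_reg_l x); [lra|]. field_simplify; [|lra]. lra.
Qed.

Lemma small_trig u : 0 <= u <= 2 ->
  u - u^3/6 <= sin u <= u /\ 1 - u^2/2 <= cos u <= 1 - u^2/2 + u^4/24.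
Proof.
  intros Hu.
  destruct (pre_sin_bound u 0 ltac:(lra) ltac:(lra)) as [s1 s2].
  destruct (pre_cos_bound u 0 ltac:(lra) ltac:(lra)) as [c1 c2].
  unfold sin_approx, sin_term, cos_approx, cos_term in *.
  cbn [sum_f_R0 Nat.mul Nat.add] in *.
  rewrite ?f0, ?f1, ?f2, ?f3, ?f4, ?f5 in *.
  assert (0 <= u^5) by (apply pow_le; lra).
  assert (0 <= u^3) by (apply pow_le; lra).
  assert (u^5 <= 4*u^3).
  { replace (u^5) with (u^3*(u*u)) by ring. nra. }
  simpl in *. lra.
Qed.

Lemma PI_lb : 157/50 < PI.
Proof.
  assert (H: 157/100 < PI/2); [|lra].
  apply PI2_lower_bound; [lra|].
  destruct (pre_cos_bound (157/100) 2 ltac:(lra) ltac:(lra)) as [c1 _].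
  change (2*2+1)%nat with 5%nat in c1. rewrite cos5 in c1.
  eapply Rlt_le_trans; [|exact c1]. unfold clb. lra.
Qed.

Lemma PI_ub : PI < 3927/1250.
Proof.
  destruct (Rlt_or_le PI (3927/1250)) as [H|H]; [exact H|exfalso].
  destruct (pre_sin_bound (3927/1250) 3 ltac:(lra) ltac:(lra)) as [_ s2].
  change (2*(3+1))%nat with 8%nat in s2.
  unfold sin_approx, sin_term in s2. cbn [sum_f_R0 Nat.mul Nat.add] in s2.
  rewrite ?f0, ?f1, ?f2, ?f3, ?f4, ?f5, ?f6, ?f7, ?f8, ?f9, ?f10, ?f11, ?f12, ?f13, ?f14, ?f15, ?f16, ?f17 in s2.
  assert (0 <= sin (3927/1250)) by (apply sin_ge_0; lra).
  simpl in s2. lra.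
Qed.

Lemma rp_pos a e : 0 < Rpower a e.
Proof. unfold Rpower; apply exp_pos. Qed.

Lemma rp_div a b e : 0 < a -> 0 < b -> Rpower (a / b) e = Rpower a e / Rpower b e.
Proof.
  intros Ha Hb. unfold Rpower.
  assert (Hd: ln (a / b) = ln a - ln b).
  { unfold Rdiv. rewrite ln_mult, ln_Rinv; try lra. apply Rinv_0_lt_compat; lra. }
  rewrite Hd.
  rewrite Rmult_minus_distr_l. unfold Rminus. rewrite exp_plus, exp_Ropp.
  unfold Rdiv. reflexivity.
Qed.

Lemma rp_powk a e (n : nat) : 0 < a -> Rpower (Rpower a e) (INR n) = Rpower a (e * INR n).
Proof. intros Ha. rewrite Rpower_mult. reflexivity. Qed.

Lemma rp_pow_eq a e (n : nat) : 0 < a -> Rpower a e ^ n = Rpower a (e * INR n).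
Proof. intros Ha. rewrite <- Rpower_pow by apply rp_pos. apply Rpower_mult. Qed.

Lemma pow5_le a b : 0 <= a -> 0 <= b -> a^5 <= b^5 -> a <= b.
Proof.
  intros Ha Hb H. destruct (Rle_lt_dec a b) as [h|h]; [exact h|exfalso].
  assert (E: a^5 - b^5 = (a - b) * (a^4 + a^3*b + a^2*b^2 + a*b^3 + b^4)) by ring.
  assert (0 < a^4) by (apply pow_lt; lra).
  assert (0 <= a^3*b) by (apply Rmult_le_pos; [apply pow_le|]; lra).
  assert (0 <= a^2*b^2) by (apply Rmult_le_pos; apply pow_le; lra).
  assert (0 <= a*b^3) by (apply Rmult_le_pos; [|apply pow_le]; lra).
  assert (0 <= b^4) by (apply pow_le; lra).
  assert (0 < (a - b) * (a^4 + a^3*b + a^2*b^2 + a*b^3 + b^4)) by (apply Rmult_lt_0_compat; lra).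
  lra.
Qed.

Lemma pow2_le a b : 0 <= a -> 0 <= b -> a^2 <= b^2 -> a <= b.
Proof. intros. nra. Qed.

Lemma B_main x : 0 < x < PI/2 -> lhs (-2/5) x < 1.
Proof.
  intros [H0 H1]. pose proof PI_ub as Hpu. pose proof PI_lb as Hpl.
  destruct (trig_bounds x ltac:(lra)) as [[Hr1 Hr2] [Hc1 Hc2]].
  assert (hs: 0 < sin x) by (apply sin_gt_0; lra).
  assert (hc: 0 < cos x) by (apply cos_gt_0; lra).
  set (r := sin x / x) in *.
  assert (hr: 0 < r) by (unfold r; apply Rdiv_lt_0_compat; lra).
  assert (ht: tan x / x = r / cos x) by (unfold r, tan; field; lra).
  unfold lhs. rewrite ht. fold r.
  set (y := x^2) in *.
  assert (Hy: 0 < y <= 247/100) by (unfold y; split; nra).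
  set (R := Rpower r (2/5)). set (C := Rpower (cos x) (2/5)).
  assert (hR: 0 < R) by apply rp_pos. assert (hC: 0 < C) by apply rp_pos.
  assert (E1: Rpower r (4 * (-2/5)) = / R^4).
  { unfold R. rewrite rp_pow_eq by lra. rewrite <- Rpower_Ropp. f_equal. simpl. lra. }
  assert (E2: Rpower (r / cos x) (-2/5) = C / R).
  { rewrite rp_div by lra. unfold C, R.
    replace (-2/5) with (-(2/5)) by lra. rewrite !Rpower_Ropp.
    field. split; apply Rgt_not_eq, rp_pos. }
  rewrite E1, E2.
  assert (R5: R^5 = r^2).
  { unfold R. rewrite rp_pow_eq by lra. rewrite <- Rpower_pow by lra. f_equal. simpl. lra. }
  assert (C5: C^5 = cos x ^2).
  { unfold C. rewrite rp_pow_eq by lra. rewrite <- Rpower_pow by lra. f_equal. simpl. lra. }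
  pose proof (polyBa y ltac:(lra) ltac:(lra)) as Ba.
  pose proof (polyBb y ltac:(lra) ltac:(lra)) as Bb.
  pose proof (polyBc y ltac:(lra) ltac:(lra)) as Bc.
  pose proof (polyBd y ltac:(lra) ltac:(lra)) as Bd.
  pose proof (polyBe y ltac:(lra) ltac:(lra)) as Be.
  pose proof (polyBf y ltac:(lra) ltac:(lra)) as Bf.
  assert (Q1: QQ y <= 1).
  { unfold QQ. assert (0 < y^2) by (apply pow_lt; lra). assert (0 < y^3) by (apply pow_lt; lra). lra. }
  set (P := PP y) in *. set (Q := QQ y) in *.
  assert (HPR: P <= R).
  { apply pow5_le; try lra.
    assert (rlb y ^2 <= r^2) by (apply pow_incr; lra). lra. }
  assert (HCQ: C <= Q).
  { apply pow5_le; try lra.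
    assert (cos x ^2 <= cub y ^2) by (apply pow_incr; lra). lra. }
  assert (K1: 0 <= (R - P) * ((R^2 + R*P + P^2) * (3*R - 2*Q) + 3*P^3)).
  { apply Rmult_le_pos; [lra|].
    assert (0 <= R^2 + R*P + P^2) by nra.
    assert (0 <= P^3) by (apply pow_le; lra).
    assert (0 <= (R^2 + R*P + P^2) * (3*R - 2*Q)) by (apply Rmult_le_pos; lra).
    lra. }
  assert (K2: 3*R^4 - 2*R^3*Q - (3*P^4 - 2*P^3*Q) = (R - P) * ((R^2 + R*P + P^2) * (3*R - 2*Q) + 3*P^3)) by ring.
  assert (K3: C * R^3 <= Q * R^3) by (apply Rmult_le_compat_r; [apply pow_le|]; lra).
  assert (K4: 1 + 2*C*R^3 < 3*R^4) by lra.
  assert (hR4: 0 < R^4) by (apply pow_lt; lra).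
  replace (1/3 * / R^4 + 2/3 * (C/R)) with ((1 + 2*C*R^3) / (3*R^4)) by (field; lra).
  unfold Rdiv. apply (Rmult_lt_reg_r (3*R^4)); [lra|].
  rewrite Rmult_assoc, Rinv_l by lra. lra.
Qed.

Definition cc := - ln 3 / (4 * (ln PI - ln 2)).

Lemma L2_eq : ln PI - ln 2 = ln (PI/2).
Proof.
  pose proof PI_lb. unfold Rdiv. rewrite ln_mult, ln_Rinv; try lra.
  all: try (apply Rinv_0_lt_compat; lra).
Qed.

Lemma L2_pos : 0 < ln PI - ln 2.
Proof. pose proof PI_lb. rewrite L2_eq. rewrite <- ln_1. apply ln_increasing; lra. Qed.

Lemma lam_bounds : 2 <= ln 3 / (ln PI - ln 2) <= 61/25.
Proof.
  pose proof PI_lb. pose proof PI_ub. pose proof L2_pos as HL. rewrite L2_eq in *.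
  assert (E: ln ((PI/2)^2) = 2 * ln (PI/2)).
  { rewrite ln_pow by lra. simpl. ring. }
  assert (E1: ln (3^25) = 25 * ln 3) by (rewrite ln_pow by lra; f_equal; simpl; lra).
  assert (E2: ln ((PI/2)^61) = 61 * ln (PI/2)) by (rewrite ln_pow by lra; f_equal; simpl; lra).
  assert (H3: 3^25 < (PI/2)^61).
  { apply Rlt_le_trans with ((157/100)^61); [lra|]. apply pow_incr; lra. }
  assert (ln (3^25) < ln ((PI/2)^61)) by (apply ln_increasing; [apply pow_lt; lra| exact H3]).
  assert (ln ((PI/2)^2) < ln 3) by (apply ln_increasing; [apply pow_lt; lra| nra]).
  set (L := ln (PI/2)) in *.
  split.
  - apply (Rmult_le_reg_r L); [lra|].
    replace (ln 3 / L * L) with (ln 3) by (field; lra). lra.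
  - apply (Rmult_le_reg_r L); [lra|].
    replace (ln 3 / L * L) with (ln 3) by (field; lra). lra.
Qed.

Lemma cc_bounds : -5/8 <= cc <= -1/2.
Proof.
  pose proof lam_bounds. pose proof L2_pos.
  assert (E: cc = - (ln 3 / (ln PI - ln 2)) / 4) by (unfold cc; field; lra).
  rewrite E. lra.
Qed.

Lemma A_left x : 0 < x -> x <= 3927/2500 - 19/100 -> lhs (-1/2) x > 1.
Proof.
  intros H0 H1. pose proof PI_ub as Hpu. pose proof PI_lb as Hpl.
  destruct (trig_bounds x ltac:(lra)) as [[Hr1 Hr2] [Hc1 Hc2]].
  assert (hs: 0 < sin x) by (apply sin_gt_0; lra).
  assert (hc: 0 < cos x) by (apply cos_gt_0; lra).
  set (r := sin x / x) in *.
  assert (hr: 0 < r) by (unfold r; apply Rdiv_lt_0_compat; lra).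
  assert (ht: tan x / x = r / cos x) by (unfold r, tan; field; lra).
  unfold lhs. rewrite ht. fold r.
  set (y := x^2) in *.
  assert (Hy: 0 < y <= 1907/1000) by (unfold y; split; nra).
  set (s := sqrt r). set (k := sqrt (cos x)).
  assert (hs2: s^2 = r) by (unfold s; simpl; rewrite Rmult_1_r; apply sqrt_sqrt; lra).
  assert (hk2: k^2 = cos x) by (unfold k; simpl; rewrite Rmult_1_r; apply sqrt_sqrt; lra).
  assert (hsp: 0 < s) by (unfold s; apply sqrt_lt_R0; lra).
  assert (hkp: 0 < k) by (unfold k; apply sqrt_lt_R0; lra).
  assert (E1: Rpower r (4 * (-1/2)) = / s^4).
  { replace (4 * (-1/2)) with (- INR 2) by (simpl; lra). rewrite Rpower_Ropp, Rpower_pow by lra.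
    f_equal. rewrite <- hs2. ring. }
  assert (E2: Rpower (r / cos x) (-1/2) = k / s).
  { rewrite rp_div by lra. replace (-1/2) with (- / 2) by lra. rewrite !Rpower_Ropp, !Rpower_sqrt by lra.
    fold s k. field. lra. }
  rewrite E1, E2.
  pose proof (polyAa y ltac:(lra) ltac:(lra)) as Aa.
  pose proof (polyAb y ltac:(lra) ltac:(lra)) as Ab.
  pose proof (polyAc y ltac:(lra) ltac:(lra)) as Ac.
  pose proof (polyAd y ltac:(lra) ltac:(lra)) as Ad.
  pose proof (polyAe y ltac:(lra) ltac:(lra)) as Ae.
  assert (K1': KK y <= 1).
  { unfold KK. assert (0 < y^2) by (apply pow_lt; lra). assert (0 < y^3) by (apply pow_lt; lra).
    assert (0 < y^4) by (apply pow_lt; lra). assert (0 < y^5) by (apply pow_lt; lra). lra. }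
  set (S := SS y) in *. set (K := KK y) in *.
  assert (HsS: s <= S) by (apply pow2_le; lra).
  assert (HKk: K <= k) by (apply pow2_le; lra).
  assert (F1: 0 <= (S - s) * ((S^2 + S*s + s^2) * (3*S - 2*K) + 3*s^3)).
  { apply Rmult_le_pos; [lra|].
    assert (0 <= S^2 + S*s + s^2) by nra.
    assert (0 <= s^3) by (apply pow_le; lra).
    assert (0 <= (S^2 + S*s + s^2) * (3*S - 2*K)) by (apply Rmult_le_pos; lra).
    lra. }
  assert (F2: 2*K*s^3 - 3*s^4 - (2*K*S^3 - 3*S^4) = (S - s) * ((S^2 + S*s + s^2) * (3*S - 2*K) + 3*s^3)) by ring.
  assert (F3: K * s^3 <= k * s^3) by (apply Rmult_le_compat_r; [apply pow_le|]; lra).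
  assert (F4: 3*s^4 < 1 + 2*k*s^3) by lra.
  assert (hs4: 0 < s^4) by (apply pow_lt; lra).
  replace (1/3 * / s^4 + 2/3 * (k/s)) with ((1 + 2*k*s^3) / (3*s^4)) by (field; lra).
  unfold Rdiv. apply Rlt_gt. apply (Rmult_lt_reg_r (3*s^4)); [lra|].
  rewrite Rmult_assoc, Rinv_l by lra. lra.
Qed.

Lemma A_right x : 0 < x < PI/2 -> PI/2 - x < 19/100 -> lhs cc x > 1.
Proof.
  intros [H0 H1] H2. pose proof PI_ub as Hpu. pose proof PI_lb as Hpl.
  pose proof lam_bounds as Hlam. pose proof cc_bounds as Hcc. pose proof L2_pos as HL.
  set (u := PI/2 - x) in *.
  assert (Hu: 0 < u < 19/100) by (split; [unfold u; lra| exact H2]).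
  assert (Ex: x = PI/2 - u) by (unfold u; ring).
  clearbody u.
  assert (Es: sin x = cos u) by (rewrite Ex; apply sin_shift).
  assert (Ec: cos x = sin u) by (rewrite Ex; apply cos_shift).
  destruct (small_trig u ltac:(lra)) as [[Su1 Su2] [Cu1 Cu2]].
  assert (Hsu: 0 < sin u) by (apply sin_gt_0; lra).
  assert (Hcu: 0 < cos u) by nra.
  assert (Hq6: 0 <= 1 - u^2/6) by nra.
  assert (Hq7: 0 <= u * (1 - u^2/6)) by (apply Rmult_le_pos; lra).
  assert (Hq8: u * (1 - u^2/6) <= sin u).
  { assert (u * (1 - u^2/6) = u - u^3/6) by field. lra. }
  assert (hx: 157/100 - u <= x) by lra.
  assert (h23: 0 <= 2/3) by lra. assert (h157: 0 <= 157/100 - u) by lra.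
  set (W := 2 - 157*u/100 + 157*u^3/1200).
  assert (B7: (157/100 - u)^13 <= x^13) by (apply pow_incr; split; [exact h157| exact hx]).
  assert (B8: (u * (1 - u^2/6))^5 <= sin u ^5).
  { apply pow_incr. split; [exact Hq7| exact Hq8]. }
  assert (B9: (2/3)^8 * (157/100 - u)^13 * (u * (1 - u^2/6))^5 <= (2/3)^8 * x^13 * sin u ^5).
  { apply Rmult_le_compat; [apply Rmult_le_pos; [apply pow_le; exact h23| apply pow_le; exact h157]| apply pow_le; exact Hq7| |exact B8].
    apply Rmult_le_compat_l; [apply pow_le; exact h23| exact B7]. }
  pose proof (polyAr u (proj1 Hu) (Rlt_le _ _ (proj2 Hu))) as Ar.
  rewrite Rpow_mult_distr in B9.
  fold W in Ar.
  assert (Z: (61/50)^8 * u^8 * W^8 < (2/3)^8 * x^13 * sin u ^5).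
  { set (a := (157/100 - u)^13) in *. set (b := (1 - u^2/6)^5) in *.
    set (c := W^8) in *.
    assert (hu5: 0 < u^5) by (apply pow_lt; lra).
    assert (P1: 0 < u^5 * ((2/3)^8 * a * b - (61/50)^8 * u^3 * c)) by (apply Rmult_lt_0_compat; lra).
    assert (P2: u^8 = u^5 * u^3) by ring.
    rewrite P2. clear -P1 B9. lra. }
  clear Ar B9 B8 B7.
  set (r := sin x / x).
  assert (hr: 0 < r) by (unfold r; rewrite Es; apply Rdiv_lt_0_compat; lra).
  set (t := tan x / x).
  assert (Et: t = cos u / (x * sin u)) by (unfold t, tan; rewrite Es, Ec; field; lra).
  assert (ht1: 1 <= t).
  { rewrite Et. apply (Rmult_le_reg_r (x * sin u)); [apply Rmult_lt_0_compat; lra|].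
    unfold Rdiv. rewrite Rmult_assoc, Rinv_l by (apply Rgt_not_eq, Rmult_lt_0_compat; lra).
    assert (x * sin u <= 2 * (19/100)) by (apply Rmult_le_compat; lra). nra. }
  unfold lhs. fold r t.
  set (lam := ln 3 / (ln PI - ln 2)) in *.
  set (m := r * (PI/2)).
  assert (hm: 0 < m) by (unfold m; apply Rmult_lt_0_compat; lra).
  assert (Elr: ln r = ln m - (ln PI - ln 2)).
  { rewrite L2_eq. unfold m. rewrite ln_mult; try lra. }
  assert (T1: 1/3 * Rpower r (4 * cc) = exp (- lam * ln m)).
  { unfold Rpower. rewrite Elr.
    replace (4 * cc * (ln m - (ln PI - ln 2))) with (- lam * ln m + ln 3)
      by (unfold cc, lam; field; lra).
    rewrite exp_plus, exp_ln by lra. field. }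
  assert (T1b: 1 - lam * ln m <= 1/3 * Rpower r (4 * cc)).
  { rewrite T1. pose proof (exp_ineq1_le (- lam * ln m)). lra. }
  assert (T2: Rpower t (-5/8) <= Rpower t cc) by (apply Rle_Rpower; lra).
  assert (key: lam * ln m < 2/3 * Rpower t (-5/8)).
  { destruct (Rle_lt_dec (ln m) 0) as [hl|hl].
    - assert (lam * ln m <= 0) by nra. pose proof (rp_pos t (-5/8)). lra.
    - assert (hlm: ln m <= m - 1) by (pose proof (exp_ineq1_le (ln m)); rewrite exp_ln in *; lra).
      set (w := 61/25 * (m - 1)).
      assert (hw: lam * ln m <= w) by (unfold w; nra).
      destruct (Rlt_le_dec (lam * ln m) (2/3 * Rpower t (-5/8))) as [ok|bad]; [exact ok|exfalso].
      set (tau := Rpower t (-1/8)).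
      assert (htau: 0 < tau) by apply rp_pos.
      assert (Et5: Rpower t (-5/8) = tau^5).
      { unfold tau. rewrite rp_pow_eq by lra. f_equal. simpl. lra. }
      assert (Et40: tau^40 * t^5 = 1).
      { unfold tau. rewrite rp_pow_eq by lra. replace (-1/8 * INR 40) with (- INR 5) by (simpl; lra).
        rewrite Rpower_Ropp, Rpower_pow by lra. field. lra. }
      rewrite Et5 in bad.
      assert (hw0: 0 < w) by (pose proof (pow_lt tau 5 htau); lra).
      assert (B1: (2/3 * tau^5)^8 <= w^8) by (apply pow_incr; split; [pose proof (pow_lt tau 5 htau); lra| lra]).
      assert (Hm1: 2 * x * (m - 1) <= u * W).
      { unfold m, r, W. rewrite Es.
        replace (2 * x * (cos u / x * (PI/2) - 1)) with (2*u - PI * (1 - cos u)) by (rewrite Ex; field; lra).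
        assert (u^2/2 - u^4/24 <= 1 - cos u) by lra.
        assert (0 <= u^2/2 - u^4/24) by nra.
        assert (157/50 * (u^2/2 - u^4/24) <= PI * (1 - cos u)) by (apply Rmult_le_compat; lra).
        nra. }
      assert (B2: w <= 61/50 * u * W / x).
      { unfold w. apply (Rmult_le_reg_r x); [lra|]. unfold Rdiv. rewrite (Rmult_assoc _ (/x)), Rinv_l by lra. lra. }
      assert (B3: w^8 <= (61/50 * u * W / x)^8) by (apply pow_incr; lra).
      assert (B4: (x * sin u)^5 <= /t^5).
      { apply (Rmult_le_reg_r (t^5)); [apply pow_lt; lra|]. rewrite Rinv_l by (apply pow_nonzero; lra).
        rewrite <- Rpow_mult_distr. replace (x * sin u * t) with (cos u) by (rewrite Et; field; lra).
        pose proof (COS_bound u). assert (cos u ^5 <= 1) by (rewrite <- (pow1 5); apply pow_incr; lra). lra. }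
      assert (B5: (2/3)^8 * (x * sin u)^5 <= (61/50 * u * W / x)^8).
      { assert ((2/3 * tau^5)^8 = (2/3)^8 * /t^5).
        { rewrite Rpow_mult_distr. rewrite <- pow_mult. simpl (5*8)%nat.
          replace (tau^40) with (/ t^5); [reflexivity|].
          apply (Rmult_eq_reg_r (t^5)); [|apply pow_nonzero; lra]. rewrite Rinv_l by (apply pow_nonzero; lra). lra. }
        assert ((2/3)^8 * (x * sin u)^5 <= (2/3)^8 * / t^5) by (apply Rmult_le_compat_l; [apply pow_le; lra| exact B4]).
        lra. }
      assert (B6: (2/3)^8 * x^13 * sin u ^5 <= (61/50)^8 * u^8 * W^8).
      { replace ((61/50 * u * W / x)^8) with ((61/50)^8 * u^8 * W^8 / x^8) in B5
          by (field; lra).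
        assert (0 < x^8) by (apply pow_lt; lra).
        apply (Rmult_le_compat_r (x^8)) in B5; [|lra].
        replace ((61/50)^8 * u^8 * W^8 / x^8 * x^8) with ((61/50)^8 * u^8 * W^8) in B5 by (field; lra).
        replace ((2/3)^8 * x^13 * sin u ^5) with ((2/3)^8 * (x * sin u)^5 * x^8) by ring. exact B5. }
      clear -Z B6. lra. }
  lra.
Qed.

Lemma exp_conv a b l : 0 <= l <= 1 -> exp (l*a + (1-l)*b) <= l * exp a + (1-l) * exp b.
Proof.
  intros Hl. set (m := l*a + (1-l)*b).
  assert (Ea: exp a = exp m * exp (a - m)) by (rewrite <- exp_plus; f_equal; ring).
  assert (Eb: exp b = exp m * exp (b - m)) by (rewrite <- exp_plus; f_equal; ring).
  pose proof (exp_ineq1_le (a - m)). pose proof (exp_ineq1_le (b - m)). pose proof (exp_pos m).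
  assert (exp m * (1 + (a - m)) <= exp a) by (rewrite Ea; apply Rmult_le_compat_l; lra).
  assert (exp m * (1 + (b - m)) <= exp b) by (rewrite Eb; apply Rmult_le_compat_l; lra).
  assert (l * (exp m * (1 + (a - m))) <= l * exp a) by (apply Rmult_le_compat_l; lra).
  assert ((1-l) * (exp m * (1 + (b - m))) <= (1-l) * exp b) by (apply Rmult_le_compat_l; lra).
  assert (l * (exp m * (1 + (a - m))) + (1-l) * (exp m * (1 + (b - m))) = exp m) by (unfold m; ring).
  lra.
Qed.

Lemma lhs_conv x p1 p2 p3 : p1 < p2 < p3 ->
  (p3 - p1) * lhs p2 x <= (p3 - p2) * lhs p1 x + (p2 - p1) * lhs p3 x.
Proof.
  intros Hp. unfold lhs, Rpower.
  set (A := ln (sin x / x)). set (B := ln (tan x / x)).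
  set (l := (p3 - p2) / (p3 - p1)).
  assert (Hl: 0 <= l <= 1).
  { unfold l. split; [unfold Rdiv; apply Rmult_le_pos; [lra| left; apply Rinv_0_lt_compat; lra]|].
    apply (Rmult_le_reg_r (p3 - p1)); [lra|]. unfold Rdiv. rewrite Rmult_assoc, Rinv_l by lra. lra. }
  assert (E1: 4 * p2 * A = l * (4 * p1 * A) + (1 - l) * (4 * p3 * A)) by (unfold l; field; lra).
  assert (E2: p2 * B = l * (p1 * B) + (1 - l) * (p3 * B)) by (unfold l; field; lra).
  rewrite E1, E2.
  pose proof (exp_conv (4 * p1 * A) (4 * p3 * A) l Hl) as C1.
  pose proof (exp_conv (p1 * B) (p3 * B) l Hl) as C2.
  assert (El: (p3 - p1) * l = p3 - p2) by (unfold l; field; lra).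
  assert (El2: (p3 - p1) * (1 - l) = p2 - p1) by (unfold l; field; lra).
  assert (H1: (p3 - p1) * exp (l * (4 * p1 * A) + (1 - l) * (4 * p3 * A)) <=
              (p3 - p1) * (l * exp (4 * p1 * A) + (1 - l) * exp (4 * p3 * A))) by (apply Rmult_le_compat_l; lra).
  assert (H2: (p3 - p1) * exp (l * (p1 * B) + (1 - l) * (p3 * B)) <=
              (p3 - p1) * (l * exp (p1 * B) + (1 - l) * exp (p3 * B))) by (apply Rmult_le_compat_l; lra).
  replace ((p3 - p1) * (l * exp (4 * p1 * A) + (1 - l) * exp (4 * p3 * A))) with
    ((p3 - p2) * exp (4 * p1 * A) + (p2 - p1) * exp (4 * p3 * A)) in H1 by (rewrite <- El, <- El2; ring).
  replace ((p3 - p1) * (l * exp (p1 * B) + (1 - l) * exp (p3 * B))) with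
    ((p3 - p2) * exp (p1 * B) + (p2 - p1) * exp (p3 * B)) in H2 by (rewrite <- El, <- El2; ring).
  lra.
Qed.

Lemma lhs0 x : lhs 0 x = 1.
Proof. unfold lhs, Rpower. rewrite !Rmult_0_r, !Rmult_0_l, exp_0. lra. Qed.

Lemma G1 x p p0 : p <= p0 -> p0 < 0 -> lhs p0 x > 1 -> lhs p x > 1.
Proof.
  intros H1 H2 H3. destruct (Req_dec p p0) as [->|Hne]; [exact H3|].
  pose proof (lhs_conv x p p0 0 ltac:(lra)) as C. rewrite lhs0 in C.
  assert ((0 - p) * 1 < (0 - p) * lhs p0 x) by (apply Rmult_lt_compat_l; lra).
  apply Rlt_gt, (Rmult_lt_reg_l (0 - p0)); lra.
Qed.

Lemma G2 x p : lhs (-2/5) x < 1 -> -2/5 <= p < 0 -> lhs p x < 1.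
Proof.
  intros H1 H2. destruct (Req_dec p (-2/5)) as [->|Hne]; [exact H1|].
  pose proof (lhs_conv x (-2/5) p 0 ltac:(lra)) as C. rewrite lhs0 in C.
  assert ((0 - p) * lhs (-2/5) x < (0 - p) * 1) by (apply Rmult_lt_compat_l; lra).
  apply (Rmult_lt_reg_l (0 - -2/5)); lra.
Qed.

Lemma G3 x p : lhs (-2/5) x < 1 -> 0 < p -> lhs p x > 1.
Proof.
  intros H1 H2.
  pose proof (lhs_conv x (-2/5) 0 p ltac:(lra)) as C. rewrite lhs0 in C.
  assert ((p - 0) * lhs (-2/5) x < (p - 0) * 1) by (apply Rmult_lt_compat_l; lra).
  apply Rlt_gt, (Rmult_lt_reg_l (0 - -2/5)); lra.
Qed.

Lemma A_all x : 0 < x < PI/2 -> lhs cc x > 1.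
Proof.
  intros Hx. pose proof PI_ub. pose proof cc_bounds.
  destruct (Rlt_le_dec (PI/2 - x) (19/100)) as [h|h].
  - apply A_right; lra.
  - apply (G1 x cc (-1/2)); try lra. apply A_left; lra.
Qed.

(* ---------- (C): for cc < p < 0 the inequality fails near PI/2 ---------- *)
Lemma rp_inv a e : 0 < a -> Rpower (/ a) e = Rpower a (- e).
Proof. intros Ha. unfold Rpower. rewrite ln_Rinv by lra. f_equal. ring. Qed.

Lemma C_ex p : cc < p < 0 -> exists x, 0 < x < PI/2 /\ lhs p x <= 1.
Proof.
  intros Hp. pose proof PI_lb. pose proof PI_ub. pose proof L2_pos as HL. pose proof cc_bounds.
  set (q := - p).
  assert (Hq: 0 < q <= 5/8) by (unfold q; lra).
  set (A := Rpower (PI/2) (4*q)).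
  assert (HA0: 0 < A) by apply rp_pos.
  assert (HA: A < 3).
  { unfold A, Rpower. rewrite <- L2_eq. rewrite <- (exp_ln 3) by lra. apply exp_increasing.
    assert (E: ln 3 = (4 * (- cc)) * (ln PI - ln 2)) by (unfold cc; field; lra).
    rewrite E. apply Rmult_lt_compat_r; [lra|]. unfold q; lra. }
  set (dl := 3 - A).
  assert (Hdl: 0 < dl) by (unfold dl; lra).
  set (T0 := Rpower (dl/4) (-1/q)).
  assert (HT0: 0 < T0) by apply rp_pos.
  set (T1 := PI/2 * T0 + 18/dl + 1).
  assert (HT1a: 18/dl + 1 <= T1) by (unfold T1; assert (0 < PI/2 * T0) by (apply Rmult_lt_0_compat; lra); lra).
  assert (Hd18: 0 < 18/dl) by (apply Rdiv_lt_0_compat; lra).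
  assert (HT1: 1 <= T1) by lra.
  set (x := atan T1).
  assert (Htan: tan x = T1) by apply tan_atan.
  pose proof (atan_bound T1) as Hb. fold x in Hb.
  assert (Hx0: 0 < x).
  { destruct (Rlt_le_dec 0 x) as [h|h]; [exact h|exfalso].
    destruct (Req_dec x 0) as [h0|h0].
    - rewrite h0, tan_0 in Htan. lra.
    - assert (tan x < 0) by (apply tan_lt_0; lra). lra. }
  exists x. split; [lra|].
  assert (hs: 0 < sin x) by (apply sin_gt_0; lra).
  set (z := / (T1 * T1)).
  assert (Hz0: 0 < z) by (unfold z; apply Rinv_0_lt_compat; nra).
  assert (Hz1: z <= dl/18).
  { unfold z. apply (Rmult_le_reg_r (T1 * T1 * 18 / dl)).
    - apply Rdiv_lt_0_compat; [nra|lra].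
    - replace (/ (T1 * T1) * (T1 * T1 * 18 / dl)) with (18/dl) by (field; lra).
      replace (dl / 18 * (T1 * T1 * 18 / dl)) with (T1 * T1) by (field; lra). nra. }
  assert (Hz2: z <= 1) by (unfold z; rewrite <- Rinv_1; apply Rinv_le_contravar; nra).
  assert (Hsx: sin x * sqrt (1 + z) = 1).
  { unfold x. rewrite sin_atan. fold x.
    assert (E: sqrt (1 + z) * T1 = sqrt (1 + T1²)).
    { rewrite <- (sqrt_square T1) at 1 by lra. rewrite <- sqrt_mult by (try apply Rmult_le_pos; lra).
      f_equal. unfold z, Rsqr. field. lra. }
    assert (0 < sqrt (1 + T1²)) by (apply sqrt_lt_R0; unfold Rsqr; nra).
    replace (T1 / sqrt (1 + T1²) * sqrt (1 + z)) with ((sqrt (1 + z) * T1) / sqrt (1 + T1²)) by (field; lra).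
    rewrite E. field. lra. }
  assert (Hsq: 0 < sqrt (1 + z)) by (apply sqrt_lt_R0; lra).
  set (r := sin x / x).
  assert (hr: 0 < r) by (unfold r; apply Rdiv_lt_0_compat; lra).
  assert (Hir: / r <= PI/2 * sqrt (1 + z)).
  { assert (Hi: / sin x = sqrt (1 + z)).
    { apply (Rmult_eq_reg_l (sin x)); [|lra]. rewrite Rinv_r by lra. lra. }
    unfold r. replace (/ (sin x / x)) with (x * / sin x) by (field; lra). rewrite Hi.
    apply Rmult_le_compat_r; lra. }
  assert (T1b: Rpower r (4 * p) <= A * (1 + z)^2).
  { replace (4 * p) with (- (4*q)) by (unfold q; ring).
    rewrite <- rp_inv by lra.
    apply Rle_trans with (Rpower (PI/2 * sqrt (1 + z)) (4*q)).
    { apply Rle_Rpower_l; [lra| split; [apply Rinv_0_lt_compat; lra| exact Hir]]. }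
    rewrite <- Rpower_mult_distr by lra. fold A. apply Rmult_le_compat_l; [lra|].
    rewrite <- Rpower_sqrt by lra. rewrite Rpower_mult.
    rewrite <- (Rpower_pow 2) by lra.
    apply Rle_Rpower; [lra| simpl; lra]. }
  set (t := tan x / x).
  assert (Ht: T0 <= t).
  { unfold t. rewrite Htan. apply (Rmult_le_reg_r x); [lra|].
    unfold Rdiv. rewrite Rmult_assoc, Rinv_l by lra. rewrite Rmult_1_r.
    assert (T0 * x <= T0 * (PI/2)) by (apply Rmult_le_compat_l; lra). unfold T1 in *. lra. }
  assert (T2b: Rpower t p <= dl/4).
  { replace p with (- q) by (unfold q; ring). rewrite Rpower_Ropp.
    assert (E: Rpower T0 q = / (dl/4)).
    { unfold T0. rewrite Rpower_mult. replace (-1/q * q) with (- (1)) by (field; lra).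
      rewrite Rpower_Ropp, Rpower_1 by lra. reflexivity. }
    assert (Rpower T0 q <= Rpower t q) by (apply Rle_Rpower_l; lra).
    rewrite <- (Rinv_inv (dl/4)). apply Rinv_le_contravar; [rewrite <- E; apply rp_pos| lra]. }
  unfold lhs. fold r t.
  assert (A * (1 + z)^2 <= A + dl/2).
  { assert ((1 + z)^2 <= 1 + 3*z) by nra.
    assert (A * (1 + z)^2 <= A * (1 + 3*z)) by (apply Rmult_le_compat_l; lra).
    assert (A * z <= 3 * (dl/18)) by (apply Rmult_le_compat; lra). lra. }
  unfold dl in *. lra.
Qed.

(* ---------- (D): for -1 < p < -2/5 the reverse inequality fails near 0 ---------- *)
Lemma D_ex p : -1 < p < -2/5 -> exists x, 0 < x < PI/2 /\ lhs p x >= 1.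
Proof.
  intros Hp. pose proof PI_lb.
  set (q := - p). assert (Hq: 2/5 < q < 1) by (unfold q; lra).
  set (d := q - 2/5). assert (Hd: 0 < d < 3/5) by (unfold d; lra).
  set (y := d/100). assert (Hy: 0 < y < 1/100) by (unfold y; lra).
  set (x := sqrt y).
  assert (Hx0: 0 < x) by (apply sqrt_lt_R0; lra).
  assert (Hx2: x^2 = y) by (unfold x; simpl; rewrite Rmult_1_r; apply sqrt_sqrt; lra).
  assert (Hx1: x < 1) by nra.
  exists x. split; [lra|].
  destruct (trig_bounds x ltac:(lra)) as [[Hr1 Hr2] [Hc1 Hc2]].
  rewrite Hx2 in *.
  assert (hs: 0 < sin x) by (apply sin_gt_0; lra).
  assert (hc: 0 < cos x) by (apply cos_gt_0; lra).
  set (r := sin x / x) in *. set (c := cos x) in *.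
  assert (y2: 0 < y^2) by (apply pow_lt; lra).
  assert (y3: 0 < y^3) by (apply pow_lt; lra).
  assert (y4: y^4 <= y^3) by (replace (y^4) with (y^3 * y) by ring; nra).
  assert (y5: 0 < y^5) by (apply pow_lt; lra).
  assert (Eq: q = -p) by reflexivity. assert (Ed: d = q - 2/5) by reflexivity. assert (Ey: y = d/100) by reflexivity.
  assert (Er: r = sin x / x) by reflexivity. assert (Ec: c = cos x) by reflexivity.
  clearbody r c x y d q.
  assert (y6: y^3 <= y^2) by (replace (y^3) with (y^2 * y) by ring; nra).
  assert (y7: y^5 <= y^4) by (replace (y^5) with (y^4 * y) by ring; nra).
  assert (R1: r <= 1 - y/6 + y^2/120) by (unfold rub in Hr2; lra).
  assert (R2: 1 - y/6 <= r) by (unfold rlb in Hr1; lra).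
  assert (C1: 1 - y/2 + y^2/24 - y^3/720 <= c) by (unfold clb in Hc1; lra).
  assert (C2: c <= 1 - y/2 + y^2/24) by (unfold cub in Hc2; lra).
  clear Hr1 Hr2 Hc1 Hc2.
  assert (hr: 0 < r) by nra.
  assert (hr1: r <= 1) by nra.
  assert (hrc: c <= r) by nra.
  assert (hc99: 99/100 <= c) by nra.
  set (al := - ln r). set (be := ln (r / c)).
  assert (Hal: 1 - r <= al) by (unfold al; pose proof (exp_ineq1_le (ln r)); rewrite exp_ln in *; lra).
  assert (Hbe: 1 - c/r <= be).
  { unfold be. assert (E: ln (r / c) = - ln (c / r)).
    { unfold Rdiv. rewrite !ln_mult, !ln_Rinv; try lra; try (apply Rinv_0_lt_compat; lra). }
    rewrite E. pose proof (exp_ineq1_le (ln (c / r))). rewrite exp_ln in * by (apply Rdiv_lt_0_compat; lra). lra. }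
  assert (Hbe2: be <= r/c - 1) by (unfold be; pose proof (exp_ineq1_le (ln (r/c))); rewrite exp_ln in * by (apply Rdiv_lt_0_compat; lra); lra).
  assert (Hba: be - 2*al <= r^3/c - 1).
  { assert (E: be - 2*al = ln (r^3 / c)).
    { unfold be, al. unfold Rdiv. rewrite !ln_mult, !ln_Rinv; try lra; try (apply Rinv_0_lt_compat; lra); try (apply pow_lt; lra).
      rewrite ln_pow by lra. simpl. ring. }
    rewrite E. pose proof (exp_ineq1_le (ln (r^3/c))). rewrite exp_ln in * by (apply Rdiv_lt_0_compat; [apply pow_lt|]; lra). lra. }
  set (a0 := y/6 - y^2/120). set (b0 := y/3 - y^2/24).
  assert (Ha0: 0 <= a0 <= al) by (unfold a0; split; nra).
  assert (Hb0: 0 <= b0 <= be).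
  { unfold b0. split; [nra|].
    assert (r - c <= 1 - c/r).
    { assert (E: 1 - c/r - (r - c) = (r - c) * (1 - r) / r) by (field; lra).
      assert (0 <= (r - c) * (1 - r) / r).
      { unfold Rdiv. apply Rmult_le_pos; [apply Rmult_le_pos; lra| left; apply Rinv_0_lt_compat; lra]. }
      lra. }
    nra. }
  assert (Hbe3: be <= y/2).
  { assert (r <= c * (1 + y/2)) by nra.
    assert (r / c <= 1 + y/2).
    { apply (Rmult_le_reg_r c); [lra|]. unfold Rdiv. rewrite Rmult_assoc, Rinv_l by lra. lra. }
    lra. }
  assert (Hba2: r^3/c - 1 <= y^2/15 + y^3/20).
  { pose proof (polyD2 y (proj1 Hy) (Rlt_le _ _ (proj2 Hy))) as D2.
    assert (r^3 <= (1 - y/6 + y^2/120)^3) by (apply pow_incr; lra).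
    assert ((1 - y/2 + y^2/24 - y^3/720)*(1 + y^2/15 + y^3/20) <= c * (1 + y^2/15 + y^3/20))
      by (apply Rmult_le_compat_r; nra).
    assert (r^3 / c <= 1 + y^2/15 + y^3/20).
    { apply (Rmult_le_reg_r c); [lra|]. unfold Rdiv. rewrite Rmult_assoc, Rinv_l by lra. lra. }
    lra. }
  assert (Et: tan x / x = r / c) by (rewrite Er, Ec; unfold tan; field; lra).
  unfold lhs. rewrite Et, <- Er. unfold Rpower.
  replace (4 * p * ln r) with (4 * q * al) by (unfold al; rewrite Eq; ring).
  replace (p * ln (r / c)) with (- (q * be)) by (unfold be; rewrite Eq; ring).
  assert (Hq0: 0 <= q) by lra.
  assert (Hal0: 0 <= al) by lra. assert (Hbe0: 0 <= be) by lra.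
  pose proof (ExpBounds.exp_lb2 (4 * q * al) ltac:(apply Rmult_le_pos; lra)) as X1.
  pose proof (ExpBounds.exp_lb3n (q * be) ltac:(apply Rmult_le_pos; lra)) as X2.
  assert (S1: q * (be - 2*al) <= q * (y^2/15 + y^3/20)) by (apply Rmult_le_compat_l; lra).
  assert (S2: q^2 * a0^2 <= q^2 * al^2) by (apply Rmult_le_compat_l; [apply pow_le; lra| apply pow_incr; lra]).
  assert (S3: q^2 * b0^2 <= q^2 * be^2) by (apply Rmult_le_compat_l; [apply pow_le; lra| apply pow_incr; lra]).
  assert (S4: q^3 * be^3 <= q^3 * (y/2)^3) by (apply Rmult_le_compat_l; [apply pow_le; lra| apply pow_incr; lra]).
  pose proof (polyD d (proj1 Hd) (Rlt_le _ _ (proj2 Hd))) as PD.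
  replace (d + 2/5) with q in PD by (rewrite Ed; ring).
  rewrite <- Ey in PD.
  fold a0 b0 in PD.
  clearbody a0 b0 al be.
  assert (Z1: (4 * q * al)^2 = 16 * (q^2 * al^2)) by ring.
  assert (Z2: (q * be)^2 = q^2 * be^2) by ring.
  assert (Z3: (q * be)^3 = q^3 * be^3) by ring.
  assert (Z4: q^3 * (y/2)^3 = q^3 * y^3 / 8) by field.
  rewrite Z1 in X1. rewrite Z2, Z3 in X2. rewrite Z4 in S4.
  assert (Z5: q^2/3 * (8 * a0^2 + b0^2) = 8/3 * (q^2 * a0^2) + 1/3 * (q^2 * b0^2)) by field.
  rewrite Z5 in PD.
  lra.
Qed.

Theorem proposition4p12 :
  (forall p : R, p <> 0 ->
     ((forall x : R, 0 < x < PI / 2 -> lhs p x > 1) <->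
      (p > 0 \/ p <= - ln 3 / (4 * (ln PI - ln 2))))) /\
  (forall p : R, p <> 0 ->
     ((forall x : R, 0 < x < PI / 2 -> lhs p x < 1) <->
      (-2/5 <= p < 0))).
Proof.
  pose proof PI_lb as Hpl. pose proof cc_bounds as Hcc.
  assert (Hone: 0 < 1 < PI/2) by lra.
  split.
  - intros p Hp0. fold cc. split.
    + intros H. destruct (Rlt_le_dec 0 p) as [h|h]; [left; lra|right].
      destruct (Rle_lt_dec p cc) as [h'|h']; [exact h'|exfalso].
      destruct (C_ex p ltac:(lra)) as [x [Hx Hl]]. specialize (H x Hx). lra.
    + intros [h|h] x Hx.
      * apply G3; [apply B_main; exact Hx| exact h].
      * apply (G1 x p cc); [exact h| lra| apply A_all; exact Hx].
  - intros p Hp0. split.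
    + intros H. destruct (Rlt_le_dec 0 p) as [h|h].
      { exfalso. pose proof (G3 1 p (B_main 1 Hone) h). specialize (H 1 Hone). lra. }
      split; [|lra].
      destruct (Rle_lt_dec (-2/5) p) as [h'|h']; [exact h'|exfalso].
      destruct (Rle_lt_dec p cc) as [h2|h2].
      * pose proof (G1 1 p cc h2 ltac:(lra) (A_all 1 Hone)). specialize (H 1 Hone). lra.
      * destruct (D_ex p ltac:(lra)) as [x [Hx Hl]]. specialize (H x Hx). lra.
    + intros Hp x Hx. apply G2; [apply B_main; exact Hx| exact Hp].
Qed.
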